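(* For any distribution of $H$ on $(0,1)$, let $Q_\bullet=(Q_k)_{k\ge0}$ be a Markov chain on $\{1,2,\dots\}$ with transition probabilities $p_{m,n}=\binom{n-1}{m-1}\mu_{n-m,m}$ for $1\le m\le n$ (and $0$ for $n<m$). Then $Q_\bullet$ has the transition mechanism of a Galton–Watson branching process in a random environment in which, at each generation $k$, every individual present independently has a number of offspring with the geometric$(1-H_k)$ distribution on $\{1,2,\dots\}$ (i.e. $P(\text{offspring}=r\mid H_k)=H_k^{r-1}(1-H_k)$), with $H_0,H_1,\dots$ i.i.d. copies of $H$. Equivalently, for every $k\ge0$, $m\ge1$ and $|z|\le1$, $$E\big(z^{Q_{k+1}-Q_k}\,\big|\,Q_k=m\big)=E\Big(\frac{1-H}{1-Hz}\Big)^m .$$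
   Context: $H$ is a random variable with values in $(0,1)$ and $\mu_{i,j}:=E[H^i(1-H)^j]$. *)

(* Defs.v *)
From HB Require Import structures.
From mathcomp Require Import all_boot all_order all_algebra.
From mathcomp Require Import all_classical all_reals all_analysis.
From mathcomp Require Import complex.
Set Implicit Arguments. Unset Strict Implicit. Unset Printing Implicit Defensive.
Import Order.TTheory GRing.Theory Num.Theory.
Local Open Scope ring_scope.

Definition rE {d} {T : measurableType d} {R : realType} (P : probability T R)
  (X : T -> R) : R := fine ('E_P[X])%E.

Definition mu {d} {T : measurableType d} {R : realType} (P : probability T R)
  (H : T -> R) (i j : nat) : R := rE P (fun w => H w ^+ i * (1 - H w) ^+ j).

Definition ptrans {d} {T : measurableType d} {R : realType} (P : probability T R)
  (H : T -> R) (m n : nat) : R :=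
  if (m <= n)%N then 'C(n.-1, m.-1)%:R * mu P H (n - m) m else 0.

Definition geom_pmf {R : realType} (h : R) (r : nat) : R :=
  if r is r'.+1 then h ^+ r' * (1 - h) else 0.

(* law of the sum of m independent geometric(1-h) offspring numbers
   (m-fold convolution of geom_pmf h) *)
Fixpoint geom_conv {R : realType} (h : R) (m n : nat) : R :=
  match m with
  | 0 => (n == 0%N)%:R
  | m'.+1 => \sum_(j < n.+1) geom_pmf h j * geom_conv h m' (n - j)
  end.

Definition cE {d} {T : measurableType d} {R : realType} (P : probability T R)
  (X : T -> R[i]) : R[i] :=
  Complex (rE P (fun w => complex.Re (X w))) (rE P (fun w => complex.Im (X w))).

(* Main.v *)
Require Import Defs.
From HB Require Import structures.
From mathcomp Require Import all_boot all_order all_algebra.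
From mathcomp Require Import all_classical all_reals all_analysis.
From mathcomp Require Import complex.
Import Order.TTheory GRing.Theory Num.Theory.
Import numFieldNormedType.Exports.
Local Open Scope classical_set_scope.
Local Open Scope ring_scope.
Local Open Scope complex_scope.

From mathcomp Require Import ring lra zify.
From mathcomp Require Import measurable_realfun.
Section gc.
Variable R : realType.
Implicit Types h : R.

Definition gcf h (j n : nat) : R :=
  if (j < n)%N then 'C(n.-1, j)%:R * h ^+ (n - j.+1) * (1 - h) ^+ j.+1 else 0.

Lemma geom_convS h m n :
  geom_conv h m.+1 n = \sum_(i < n.+1) geom_pmf h i * geom_conv h m (n - i).
Proof. by []. Qed.

Lemma conv_rec h (g : nat -> R) n :
  \sum_(i < n.+2) geom_pmf h i * g (n.+1 - i)%N =
  (1 - h) * g n + h * \sum_(i < n.+1) geom_pmf h i * g (n - i)%N.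
Proof.
rewrite big_ord_recl /= mul0r add0r.
rewrite big_ord_recl /= expr0 mul1r ?subn0.
rewrite [in RHS]big_ord_recl /= mul0r add0r mulr_sumr; congr (_ + _).
  by congr (_ * g _); rewrite /bump; lia.
apply: eq_bigr => i _; rewrite /bump !leq0n !add1n !add0n subSS exprS; ring.
Qed.

Lemma gcf_rec h j n :
  (1 - h) * gcf h j n + h * gcf h j.+1 n = gcf h j.+1 n.+1.
Proof.
rewrite /gcf; case: (ltnP j n) => hjn; last first.
  have -> : (j.+1 < n.+1)%N = false by lia.
  have -> : (j.+1 < n)%N = false by lia.
  by rewrite !mulr0 add0r.
have -> : n = (j.+1 + (n - j.+1))%N by lia.
move: (n - j.+1)%N => k.
rewrite ltnS leq_addr.
case: k => [|k].
  by rewrite addn0 ltnn subnn !expr0 !binn /= subnn expr0 mulr0 addr0 !mul1r !exprS.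
have -> : (j.+1 < j.+1 + k.+1)%N by lia.
have -> : ((j.+1 + k.+1).-1 = (j + k).+1)%N by lia.
have -> : ((j.+1 + k.+1 - j.+1) = k.+1)%N by lia.
have -> : ((j.+1 + k.+1) - j.+2 = k)%N by lia.
have -> : ((j.+1 + k.+1).+1.-1 = (j + k).+2)%N by lia.
have -> : ((j.+1 + k.+1).+1 - j.+2 = k.+1)%N by lia.
rewrite (binS (j + k).+1 j) natrD !exprS; ring.
Qed.

Lemma geom_conv_cf h j n : geom_conv h j.+1 n = gcf h j n.
Proof.
elim: j n => [|j IH] n.
  elim: n => [|n IHn]; rewrite geom_convS.
    by rewrite big_ord1 /= mul0r /gcf.
  rewrite conv_rec -geom_convS IHn /gcf /=.
  case: n {IHn} => [|n] /=.
    rewrite subnn !expr0 bin0 expr1; ring.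
  rewrite !bin0 !subn1 /= !expr1 exprS; ring.
elim: n => [|n IHn]; rewrite geom_convS.
  by rewrite big_ord1 /= mul0r /gcf.
by rewrite conv_rec -geom_convS IHn IH gcf_rec.
Qed.
End gc.
Arguments gcf {R} h j n.

Section Aalg.
Variable F : fieldType.
Definition Aser j K (x : F) := \sum_(0 <= k < K) 'C(k + j, j)%:R * x ^+ k.

Lemma Aser0 j x : Aser j 0 x = 0. Proof. by rewrite /Aser big_geq. Qed.
Lemma AserS j K x : Aser j K.+1 x = Aser j K x + 'C(K + j, j)%:R * x ^+ K.
Proof. by rewrite /Aser big_nat_recr. Qed.

Lemma Aser_geo K x : (1 - x) * Aser 0 K x = 1 - x ^+ K.
Proof.
elim: K => [|K IH]; first by rewrite Aser0 mulr0 expr0 subrr.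
rewrite AserS mulrDr IH addn0 bin0 exprS; ring.
Qed.

Lemma Aser_rec j K x :
  (1 - x) * Aser j.+1 K x = Aser j K x - 'C(K + j, j.+1)%:R * x ^+ K.
Proof.
elim: K => [|K IH]; first by rewrite !Aser0 mulr0 add0n bin_small // mul0r subr0.
rewrite !AserS mulrDr IH addnS addSn binS natrD exprS; ring.
Qed.

Definition Dser j K x := (1 - x)^-1 ^+ j.+1 - Aser j K x.

Lemma Dser0 K x : 1 - x != 0 -> Dser 0 K x = (1 - x)^-1 * x ^+ K.
Proof.
move=> nz; have E : Aser 0 K x = (1 - x)^-1 * (1 - x ^+ K) by rewrite -Aser_geo mulKf.
rewrite /Dser E expr1; ring.
Qed.

Lemma DserS j K x : 1 - x != 0 ->
  Dser j.+1 K x = (1 - x)^-1 * (Dser j K x + 'C(K + j, j.+1)%:R * x ^+ K).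
Proof.
move=> nz.
have E : Aser j.+1 K x = (1 - x)^-1 * (Aser j K x - 'C(K + j, j.+1)%:R * x ^+ K).
  by rewrite -Aser_rec mulKf.
rewrite /Dser E exprS; ring.
Qed.
End Aalg.
Arguments Aser {F} j K x.
Arguments Dser {F} j K x.

Fixpoint Eb (F : pzRingType) (j K : nat) (r s : F) : F :=
  match j with
  | 0 => s * r ^+ K
  | j'.+1 => s * (Eb F j' K r s + 'C(K + j', j'.+1)%:R * r ^+ K)
  end.
Arguments Eb {F} j K r s.

Lemma Eb_rmorph (F1 F2 : nzRingType) (f : {rmorphism F1 -> F2}) j K r s :
  f (Eb j K r s) = Eb j K (f r) (f s).
Proof.
elim: j => [|j IH] /=; first by rewrite rmorphM rmorphXn.
by rewrite rmorphM rmorphD IH rmorphM rmorph_nat rmorphXn.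
Qed.

Lemma Dser_le (F : numFieldType) j K (x r s : F) : 1 - x != 0 ->
  `|x| <= r -> `|(1 - x)^-1| <= s -> `|Dser j K x| <= Eb j K r s.
Proof.
move=> nz xr us.
have r0 : 0 <= r by apply: le_trans xr.
have xK : `|x ^+ K| <= r ^+ K by rewrite normrX lerXn2r // nnegrE.
elim: j => [|j IH] /=.
  by rewrite Dser0 // normrM ler_pM.
rewrite DserS // normrM ler_pM //.
apply: le_trans (ler_normD _ _) _; apply: lerD => //.
by rewrite normrM normr_nat ler_pM.
Qed.

Lemma Eb_ge0 (F : numDomainType) j K (r s : F) : 0 <= r -> 0 <= s -> 0 <= Eb j K r s.
Proof.
move=> r0 s0; elim: j => [|j IH] /=; first by rewrite mulr_ge0 // exprn_ge0.
by rewrite mulr_ge0 // addr_ge0 // mulr_ge0 // exprn_ge0.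
Qed.

Section real.
Variable R : realType.

Lemma Dser_real j K (h : R) : 0 <= h < 1 ->
  Dser j K h = Eb j K h (1 - h)^-1.
Proof.
move=> /andP[h0 h1]; have nz : 1 - h != 0 by rewrite subr_eq0 eq_sym lt_eqF.
elim: j => [|j IH]; first by rewrite Dser0 //.
by rewrite DserS // IH.
Qed.

Lemma Aser_ge0 j K (h : R) : 0 <= h -> 0 <= Aser j K h.
Proof. by move=> h0; apply: sumr_ge0 => k _; rewrite mulr_ge0 // exprn_ge0. Qed.

Lemma Aser_le j K (h : R) : 0 <= h < 1 -> Aser j K h <= (1 - h)^-1 ^+ j.+1.
Proof.
move=> hh; have := @Dser_real j K h hh; rewrite /Dser => E.
move/andP: hh => [h0 h1].
rewrite -subr_ge0 E Eb_ge0 // invr_ge0 subr_ge0 ltW //.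
Qed.

Lemma term_cvg j (h : R) : 0 <= h < 1 ->
  (fun K => 'C(K + j, j)%:R * h ^+ K) @ \oo --> 0.
Proof.
move=> hh; move/andP: (hh) => [h0 h1].
apply: cvg_series_cvg_0.
apply: nondecreasing_is_cvgn.
  apply: nondecreasing_series => n _ _; rewrite mulr_ge0 // exprn_ge0 //.
exists ((1 - h)^-1 ^+ j.+1) => y [K _ <-].
exact: Aser_le.
Qed.

Lemma Eb_cvg j (h : R) : 0 <= h < 1 ->
  (fun K => Eb j K h (1 - h)^-1) @ \oo --> 0.
Proof.
move=> hh; move/andP: (hh) => [h0 h1].
elim: j => [|j IH] /=.
  rewrite -(mulr0 (1 - h)^-1); apply: cvgM; first exact: cvg_cst.
  by apply: cvg_expr; rewrite ger0_norm.
rewrite -(mulr0 (1 - h)^-1); apply: cvgM; first exact: cvg_cst.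
rewrite -(addr0 0); apply: cvgD => //.
apply: (@squeeze_cvgr _ _ _ _ (cst 0) (fun K => 'C(K + j.+1, j.+1)%:R * h ^+ K)).
- apply: nearW => K /=; rewrite mulr_ge0 ?exprn_ge0 //=.
  rewrite ler_wpM2r ?exprn_ge0 // ler_nat leq_bin2l // addnS //.
- exact: cvg_cst.
- exact: term_cvg.
Qed.
End real.

Section cpx.
Variable R : realType.
Local Open Scope complex_scope.

Lemma pointwise (h : R) (z : R[i]) j K : 0 < h < 1 -> `|z| <= 1 ->
  `|\sum_(0 <= k < K) ('C(k + j, j)%:R * h ^+ k * (1 - h) ^+ j.+1)%:C * z ^+ k
    - ((1 - h%:C) / (1 - h%:C * z)) ^+ j.+1| <=
    ((1 - h) ^+ j.+1 * Eb j K h (1 - h)^-1)%:C /\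
  `|((1 - h%:C) / (1 - h%:C * z)) ^+ j.+1| <= 1.
Proof.
move=> /andP[h0 h1] hz.
set x := h%:C * z.
have hC0 : 0 <= h%:C by rewrite ler0c ltW.
have hx : `|x| <= h%:C.
  rewrite /x normrM (ger0_norm hC0); rewrite -[leRHS]mulr1; exact: ler_wpM2l.
have cC : (1 - h)%:C = 1 - h%:C by rewrite rmorphB rmorph1.
have cpos : 0 < (1 - h)%:C by rewrite ltcR subr_gt0.
have h1x : (1 - h)%:C <= `|1 - x|.
  apply: le_trans (lerB_dist _ _); rewrite normr1 cC; exact: lerB.
have nz : 1 - x != 0 by rewrite -normr_gt0 (lt_le_trans cpos h1x).
have hu : `|(1 - x)^-1| <= ((1 - h)^-1)%:C.
  rewrite normfV fmorphV lef_pV2 ?posrE // (lt_le_trans cpos h1x) //.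
have EF : \sum_(0 <= k < K) ('C(k + j, j)%:R * h ^+ k * (1 - h) ^+ j.+1)%:C * z ^+ k
    = ((1 - h) ^+ j.+1)%:C * Aser j K x.
  rewrite /Aser mulr_sumr; apply: eq_bigr => k _.
  rewrite !rmorphM !rmorphXn rmorph_nat /x exprMn; ring.
have EG : ((1 - h%:C) / (1 - h%:C * z)) ^+ j.+1 = ((1 - h) ^+ j.+1)%:C * (1 - x)^-1 ^+ j.+1.
  by rewrite exprMn -cC rmorphXn.
rewrite EF EG; split.
  have -> : ((1 - h) ^+ j.+1)%:C * Aser j K x - ((1 - h) ^+ j.+1)%:C * (1 - x)^-1 ^+ j.+1
      = - (((1 - h) ^+ j.+1)%:C * Dser j K x) by rewrite /Dser; ring.
  rewrite normrN normrM ger0_norm; last by rewrite ler0c exprn_ge0 // subr_ge0 ltW.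
  rewrite rmorphM (@Eb_rmorph _ _ (real_complex R)); apply: ler_wpM2l.
    by rewrite ler0c exprn_ge0 // subr_ge0 ltW.
  by apply: Dser_le.
rewrite normrM normrX ger0_norm; last by rewrite ler0c exprn_ge0 // subr_ge0 ltW.
rewrite [X in _ <= X](_ : 1 = ((1 - h) ^+ j.+1)%:C * ((1 - h)^-1)%:C ^+ j.+1); last first.
  rewrite -rmorphXn -rmorphM -exprMn mulfV ?expr1n //.
  by rewrite subr_eq0 eq_sym lt_eqF.
apply: ler_wpM2l; first by rewrite ler0c exprn_ge0 // subr_ge0 ltW.
by apply: lerXn2r; rewrite ?nnegrE // ler0c invr_ge0 subr_ge0 ltW.
Qed.
End cpx.

Section meas.
Context {R : realType} {d : measure_display} {T : measurableType d}
  (P : probability T R).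

Lemma rE_Rint (X : T -> R) : rE P X = Rintegral P setT X.
Proof. by rewrite /rE unlock. Qed.

Lemma bint (f : T -> R) (M : R) : measurable_fun setT f ->
  (forall w, `|f w| <= M) -> P.-integrable setT (EFin \o f).
Proof.
move=> mf fM.
apply: (@le_integrable _ _ _ P setT measurableT _ (EFin \o cst M)).
- exact/measurable_EFinP.
- move=> w _ /=; rewrite lee_fin.
  exact: le_trans (fM w) (ler_norm _).
- exact: finite_measure_integrable_cst.
Qed.

Lemma rE_Zr (c : R) (f : T -> R) : P.-integrable setT (EFin \o f) ->
  rE P (fun w => f w * c) = rE P f * c.
Proof. by move=> hf; rewrite !rE_Rint RintegralZr. Qed.

Lemma rE_Zl (c : R) (f : T -> R) : P.-integrable setT (EFin \o f) ->
  rE P (fun w => c * f w) = c * rE P f.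
Proof. by move=> hf; rewrite !rE_Rint RintegralZl. Qed.

Lemma rE_sum (s : seq nat) (f : nat -> T -> R) :
  (forall i, P.-integrable setT (EFin \o f i)) ->
  rE P (fun w => \sum_(i <- s) f i w) = \sum_(i <- s) rE P (f i).
Proof.
move=> hf; elim: s => [|i s IH].
  rewrite big_nil rE_Rint /Rintegral.
  under eq_integral do rewrite big_nil.
  by rewrite integral0.
rewrite big_cons -IH !rE_Rint.
under eq_Rintegral do rewrite big_cons.
rewrite RintegralD //.
have -> : EFin \o (fun w => \sum_(j <- s) f j w) = (fun w => \sum_(j <- s) (EFin \o f j) w).
  by apply: funext => w /=; rewrite sumEFin.
exact: integrable_sum.
Qed.

Lemma rE_dct (f_ : nat -> T -> R) (f : T -> R) (M : R) :
  (forall n, measurable_fun setT (f_ n)) ->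
  (forall w, (fun n => f_ n w) @ \oo --> f w) ->
  (forall n w, `|f_ n w| <= M) -> (forall w, `|f w| <= M) ->
  (fun n => rE P (f_ n)) @ \oo --> rE P f.
Proof.
move=> mf cf bf bf'.
have mlim : measurable_fun setT f.
  by apply: (measurable_fun_cvg mf) => w _; exact: cf.
have intf : P.-integrable setT (EFin \o f) by exact: bint bf'.
have h1 : forall n, measurable_fun setT (fun w => (f_ n w)%:E).
  by move=> n; apply/measurable_EFinP.
have h2 : forall w, setT w -> (fun n => (f_ n w)%:E) @ \oo --> (f w)%:E.
  move=> w _; apply: cvg_EFin; first exact: nearW.
  exact: cf.
have h3 : forall w, setT w -> (cst M%:E : T -> \bar R) w \is a fin_num by [].
have h5 : forall n w, setT w -> (`|(f_ n w)%:E| <= (cst M%:E : T -> \bar R) w)%E.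
  by move=> n w _; rewrite abse_EFin lee_fin.
have H := @dominated_cvg _ T R P setT measurableT (fun n w => (f_ n w)%:E)
  (fun w => (f w)%:E) (cst M%:E) h1 h2 h3
  (finite_measure_integrable_cst P M measurableT) h5.

have fin := integrable_fin_num measurableT intf.
rewrite rE_Rint /Rintegral.
have -> : (fun n => rE P (f_ n)) = fine \o (fun n => \int[P]_x (f_ n x)%:E)%E.
  by apply: funext => n /=; rewrite rE_Rint.
apply: fine_cvg; rewrite fineK //.
Qed.

End meas.

Section mainsec.
Variables (R : realType) (d : measure_display) (T : measurableType d)
  (P : probability T R) (H : {RV P >-> R}).
Hypothesis H01 : forall w, 0 < H w < 1.

Lemma mHpow a b : measurable_fun setT (fun w => H w ^+ a * (1 - H w) ^+ b).
Proof.
apply: measurable_funM; apply: measurable_funX => //.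
apply: measurable_funB => //; exact: (@measurable_funPT _ _ _ _ H).
Qed.

Lemma bHpow a b w : `|H w ^+ a * (1 - H w) ^+ b| <= 1.
Proof.
have /andP[h0 h1] := H01 w.
rewrite ger0_norm; last by rewrite mulr_ge0 // exprn_ge0 // ?subr_ge0 ltW.
rewrite -[leRHS](mulr1 1); apply: ler_pM.
- by rewrite exprn_ge0 // ltW.
- by rewrite exprn_ge0 // subr_ge0 ltW.
- by rewrite exprn_ile1 // ltW.
- by rewrite exprn_ile1 // ?subr_ge0 ?ltW //; lra.
Qed.

Lemma iHpow a b : P.-integrable setT (EFin \o (fun w => H w ^+ a * (1 - H w) ^+ b)).
Proof. exact: bint (mHpow a b) (bHpow a b). Qed.

Lemma part1 m n : (1 <= m)%N ->
  ptrans P H m n = rE P (fun w => geom_conv (H w) m n).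
Proof.
case: m => [//|j] _.
have -> : (fun w => geom_conv (H w) j.+1 n) = (fun w => gcf (H w) j n).
  by apply: funext => w; rewrite geom_conv_cf.
rewrite /ptrans /gcf /=.
case: ifP => hjn.
  rewrite /mu -rE_Zl; last exact: iHpow.
  by congr (rE P _); apply: funext => w; rewrite mulrA.
rewrite rE_Rint /Rintegral.
by rewrite integral0.
Qed.

Definition aa j k w := 'C(k + j, j)%:R * H w ^+ k * (1 - H w) ^+ j.+1.

Lemma aa_mes j k : measurable_fun setT (aa j k).
Proof.
have -> : aa j k = (fun w => 'C(k + j, j)%:R * (H w ^+ k * (1 - H w) ^+ j.+1)).
  by apply: funext => w; rewrite /aa mulrA.
apply: measurable_funM => //; exact: mHpow.
Qed.

Lemma aa_bound j k w : `|aa j k w| <= 'C(k + j, j)%:R.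
Proof.
have hb := bHpow k j.+1 w.
by rewrite /aa -mulrA normrM normr_nat -[leRHS]mulr1 ler_wpM2l.
Qed.

Lemma aa_int j k : P.-integrable setT (EFin \o aa j k).
Proof. exact: bint (aa_mes j k) (aa_bound j k). Qed.

Lemma ptrans_aa j k : ptrans P H j.+1 (k + j.+1) = rE P (aa j k).
Proof.
rewrite part1 //; congr (rE P _); apply: funext => w.
rewrite geom_conv_cf /gcf /aa.
have -> : (j < k + j.+1)%N by lia.
have -> : ((k + j.+1).-1 = k + j)%N by lia.
by have -> : (k + j.+1 - j.+1 = k)%N by lia.
Qed.

Local Open Scope complex_scope.

Lemma cvg_by_bound (u : nat -> R) (l : R) (e : nat -> R) :
  (forall n, `|u n - l| <= e n) -> e @ \oo --> 0 -> u @ \oo --> l.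
Proof.
move=> ue e0.
apply: (@squeeze_cvgr _ _ _ _ (fun n => l - e n) (fun n => l + e n)).
- apply: nearW => n; have := ue n; rewrite ler_norml => /andP[a b].
  apply/andP; split; lra.
- rewrite -[X in _ --> X]subr0; apply: cvgB => //; exact: cvg_cst.
- rewrite -[X in _ --> X]addr0; apply: cvgD => //; exact: cvg_cst.
Qed.

Variable p : R[i] -> R.
Hypothesis pD : forall a b, p (a + b) = p a + p b.
Hypothesis pZ : forall (c : R) w, p (c%:C * w) = c * p w.
Hypothesis pN : forall w, (`|p w|)%:C <= `|w|.

Lemma p0 : p 0 = 0.
Proof. by have := pD 0 0; rewrite addr0 => /eqP; rewrite -subr_eq subrr eq_sym => /eqP. Qed.

Lemma pB a b : p (a - b) = p a - p b.
Proof. by rewrite -[in RHS](subrK b a) [in RHS]pD addrK. Qed.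

Lemma p_sum (s : seq nat) (f : nat -> R[i]) :
  p (\sum_(i <- s) f i) = \sum_(i <- s) p (f i).
Proof.
elim: s => [|i s IH]; first by rewrite !big_nil p0.
by rewrite !big_cons pD IH.
Qed.

Lemma main_proj (j : nat) (z : R[i]) : `|z| <= 1 ->
  (fun N => p (\sum_(j.+1 <= n < N) (ptrans P H j.+1 n)%:C * z ^+ (n - j.+1)))
   @ \oo --> rE P (fun w => p (((1 - (H w)%:C) / (1 - (H w)%:C * z)) ^+ j.+1)).
Proof.
move=> hz.
pose fR K w := \sum_(0 <= k < K) aa j k w * p (z ^+ k).
have iaa : forall k, P.-integrable setT (EFin \o (fun w => aa j k w * p (z ^+ k))).
  move=> k; apply: (@bint _ _ _ P _ ('C(k + j, j)%:R * `|p (z ^+ k)|)).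
    by apply: measurable_funM => //; exact: aa_mes.
  by move=> w; rewrite normrM ler_wpM2r // aa_bound.
have ES : forall N, p (\sum_(j.+1 <= n < N) (ptrans P H j.+1 n)%:C * z ^+ (n - j.+1))
    = rE P (fR (N - j.+1)%N).
  move=> N; rewrite (big_addn 0 N j.+1) p_sum /fR rE_sum //.
  by apply: eq_bigr => k _; rewrite addnK pZ ptrans_aa rE_Zr // aa_int.
have -> : (fun N => p (\sum_(j.+1 <= n < N) (ptrans P H j.+1 n)%:C * z ^+ (n - j.+1)))
    = (fun N => rE P (fR (N - j.+1)%N)) by apply: funext => N; exact: ES.
rewrite -(cvg_shiftn j.+1).
rewrite (eq_cvg _ (g := fun n => rE P (fR n))); last by move=> n /=; rewrite addnK.
have EF : forall K w, fR K w = p (\sum_(0 <= k < K)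
    ('C(k + j, j)%:R * H w ^+ k * (1 - H w) ^+ j.+1)%:C * z ^+ k).
  by move=> K w; rewrite p_sum /fR; apply: eq_bigr => k _; rewrite pZ.
apply: (@rE_dct _ _ _ P _ _ 2).
- move=> K; apply: measurable_sum => k; apply: measurable_funM => //; exact: aa_mes.
- move=> w; have /andP[h0 h1] := H01 w.
  apply: (@cvg_by_bound _ _ (fun K => (1 - H w) ^+ j.+1 * Eb j K (H w) (1 - H w)^-1)).
  + move=> K; have [hpt _] := @pointwise R (H w) z j K (H01 w) hz.
    by rewrite EF -pB -lecR; exact: le_trans (pN _) hpt.
  + rewrite -(mulr0 ((1 - H w) ^+ j.+1)); apply: cvgM; first exact: cvg_cst.
    by apply: Eb_cvg; rewrite ltW.
- move=> K w; have /andP[h0 h1] := H01 w.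
  have [hpt hG] := @pointwise R (H w) z j K (H01 w) hz.
  have e1 : (1 - H w) ^+ j.+1 * Eb j K (H w) (1 - H w)^-1 <= 1.
    rewrite -Dser_real; last by rewrite ltW.
    have := @Aser_ge0 R j K (H w) (ltW h0).
    rewrite /Dser mulrBr -exprMn mulfV ?expr1n; last by rewrite subr_eq0 eq_sym lt_eqF.
    move=> hA; rewrite lerBlDr lerDl mulr_ge0 // exprn_ge0 // subr_ge0 ltW //.
  rewrite EF -lecR; apply: le_trans (pN _) _.
  set F := \sum_(0 <= k < K) _.
  set G := ((1 - (H w)%:C) / (1 - (H w)%:C * z)) ^+ j.+1 in hpt hG *.
  rewrite -[F](subrK G F); apply: le_trans (ler_normD _ _) _.
  apply: le_trans (lerD hpt hG) _.
  rewrite -(rmorph1 (real_complex R)) -rmorphD lecR; lra.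
- move=> w; have /andP[h0 h1] := H01 w.
  have [_ hG] := @pointwise R (H w) z j 0 (H01 w) hz.
  rewrite -lecR; apply: le_trans (pN _) _; apply: le_trans hG _.
  by rewrite -(rmorph1 (real_complex R)) lecR; lra.
Qed.
End mainsec.

Section ReIm.
Variable R : realType.
Local Open Scope complex_scope.

Lemma ReD (a b : R[i]) : complex.Re (a + b) = complex.Re a + complex.Re b.
Proof. by case: a; case: b. Qed.
Lemma ImD (a b : R[i]) : complex.Im (a + b) = complex.Im a + complex.Im b.
Proof. by case: a; case: b. Qed.
Lemma ReZ (c : R) (w : R[i]) : complex.Re (c%:C * w) = c * complex.Re w.
Proof. by case: w => a b /=; rewrite mul0r subr0. Qed.
Lemma ImZ (c : R) (w : R[i]) : complex.Im (c%:C * w) = c * complex.Im w.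
Proof. by case: w => a b /=; rewrite mul0r addr0. Qed.
Lemma ReN (w : R[i]) : (`|complex.Re w|)%:C <= `|w|.
Proof. exact: normc_ge_Re. Qed.
Lemma ImN (w : R[i]) : (`|complex.Im w|)%:C <= `|w|.
Proof.
have := normc_ge_Re (w * 'i); rewrite ReiNIm normrN normrM.
have -> : `|'i| = 1 :> R[i].
  by rewrite normc_def /= expr0n /= add0r expr1n sqrtr1.
by rewrite mulr1.
Qed.
End ReIm.

Local Open Scope complex_scope.

Theorem mainTheorem4 (R : realType) (d : measure_display) (T : measurableType d)
  (P : probability T R) (H : {RV P >-> R})
  (H01 : forall w, 0 < H w < 1) :
  (forall m n : nat, (1 <= m)%N ->
     ptrans P H m n = rE P (fun w => geom_conv (H w) m n)) /\
  (forall (m : nat) (z : R[i]), (1 <= m)%N ->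
     `|z| <= 1 ->
     let S := fun N : nat =>
       \sum_(m <= n < N) (ptrans P H m n)%:C * z ^+ (n - m) in
     let G := cE P (fun w => ((1 - (H w)%:C) / (1 - (H w)%:C * z)) ^+ m) in
     (fun N => complex.Re (S N) : R) @ \oo --> (complex.Re G : R) /\
     (fun N => complex.Im (S N) : R) @ \oo --> (complex.Im G : R)).
Proof.
split.
  by move=> m n hm; apply: part1.
move=> m z hm hz.
case: m hm => [//|j] _ S G.
rewrite /S /G /cE /=; split.
- apply: (@main_proj R d T P H H01 (@complex.Re R)) => //.
  + exact: ReD.
  + exact: ReZ.
  + exact: ReN.
- apply: (@main_proj R d T P H H01 (@complex.Im R)) => //.
  + exact: ImD.
  + exact: ImZ.
  + exact: ImN.
Qed.
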